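(* Let $G$ be a finite solvable group and $H$ be a subgroup of $G$. Then $d_{L(G)^*}(H)\leq |G|-1$. Moreover, $$|E(L(G)^* )|\leq\frac{1}{2}\,|V(L(G)^* )|\,(|G|-1),$$ where $V(L(G)^* )$ and $E(L(G)^* )$ denote the sets of vertices and edges of $L(G)^*$.
   Context: The subgroup graph $L(G)^*$ of a finite group $G$ is the simple undirected graph whose vertices are the subgroups of $G$, two subgroups $H_1,H_2$ being adjacent iff one is a maximal subgroup of the other (i.e. $H_1<H_2$ with no subgroup strictly between them, or vice versa). $d_{L(G)^*}(H)$ is the degree of the vertex $H$. *)

(* Defs.v *)
From mathcomp Require Import all_boot all_fingroup all_solvable.
Set Implicit Arguments. Unset Strict Implicit. Unset Printing Implicit Defensive.
Local Open Scope group_scope.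

Definition subgroup_vertices (gT : finGroupType) (G : {group gT}) : {set {group gT}} :=
  [set H : {group gT} | H \subset G].

Definition covers (gT : finGroupType) (K H : {group gT}) : bool :=
  (K \proper H) && [forall M : {group gT}, ~~ ((K \proper M) && (M \proper H))].

Definition sg_adj (gT : finGroupType) (H1 H2 : {group gT}) : bool :=
  covers H1 H2 || covers H2 H1.

Definition sg_degree (gT : finGroupType) (G H : {group gT}) : nat :=
  #|[set K in subgroup_vertices G | sg_adj H K]|.

Definition sg_edges (gT : finGroupType) (G : {group gT}) : {set {set {group gT}}} :=
  [set [set H1; H2] | H1 in subgroup_vertices G, H2 in subgroup_vertices G
                    & sg_adj H1 H2].

(* Main.v *)
Require Import Defs.
From mathcomp Require Import all_boot all_fingroup all_solvable.
Set Implicit Arguments. Unset Strict Implicit. Unset Printing Implicit Defensive.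
Local Open Scope group_scope.

Lemma card_bigcup_le (T I : finType) (P : {set I}) (F : I -> {set T}) :
  #|\bigcup_(i in P) F i| <= \sum_(i in P) #|F i|.
Proof.
elim/big_rec2: _ => [|i A n _ IH]; first by rewrite cards0.
by rewrite (leq_trans (leq_card_setU _ _).1) // leq_add2l.
Qed.

Lemma gr_eq (gT : finGroupType) (X Y : {group gT}) : X :=: Y -> X = Y.
Proof. by move=> e; apply: group_inj e. Qed.

Section Wall.
Variable gT : finGroupType.
Implicit Types G H K N C M X Y : {group gT}.

Definition kset G N C := [set K : {group gT} |
  [&& K \subset C, K <| G, K :&: N \subset [1] & (#|K| * #|N|)%N == #|C|]].

Lemma minnormal_facts G N : minnormal N G -> N \subset G ->
  [/\ N <| G, N :!=: 1 & forall H, H <| G -> H \subset N -> H :=: 1 \/ H :=: N].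
Proof.
move=> minN sNG; case/mingroupP: minN => /andP[ntN nNG] minN.
split=> //; first by rewrite /normal sNG.
move=> H /andP[_ nHG] sHN; have [->|ntH] := eqVneq (H : {set gT}) 1; first by left.
by right; rewrite (minN H) // ntH.
Qed.

Lemma ksetP G N C K : K \in kset G N C ->
  [/\ K \subset C, K <| G, K :&: N = 1 & (#|K| * #|N|)%N = #|C|].
Proof. by rewrite inE => /and4P[? ? /trivgP ? /eqP ?]. Qed.

Lemma kset_mul G N C K : N \subset C -> K \in kset G N C -> K * N = C.
Proof.
move=> sNC /ksetP[sKC _ tiKN cK]; apply/eqP.
by rewrite eqEcard mul_subG //= (TI_cardMg tiKN) cK leqnn.
Qed.

Lemma kset_chief G N C K Y : minnormal N G -> N \subset G -> N \subset C ->
  K \in kset G N C -> Y <| G -> K \subset Y -> Y \subset C -> Y :=: K \/ Y :=: C.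
Proof.
move=> minN sNG sNC kK nsYG sKY sYC.
have [nsNG ntN minN'] := minnormal_facts minN sNG.
have eKN := kset_mul sNC kK.
have eY : K * (N :&: Y) = Y by rewrite group_modl // eKN; apply/setIidPr.
have [e1|eN] := minN' (N :&: Y)%G (normalI nsNG nsYG) (subsetIl _ _).
  by left; rewrite -eY /= e1 mulg1.
by right; rewrite -eY /= eN eKN.
Qed.


Lemma kset_bound G N : minnormal N G -> N \subset G ->
  forall C, C <| G -> N \subset C -> #|kset G N C| <= #|C : N|.
Proof.
move=> minN sNG; have [nsNG ntN minN'] := minnormal_facts minN sNG.
have nNG := normal_norm nsNG.
have N0 : 0 < #|N| by [].
have N1 : 1 < #|N| by rewrite cardG_gt1.
move=> C0; have [n] := ubnP #|C0|; elim: n C0 => // n IHn C /ltnSE-leCn nsCG sNC.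
have [le1|] := leqP #|kset G N C| 1; first by apply: leq_trans le1 _; rewrite indexg_gt0.
case/card_gt1P => K0 [K1 [kK0 kK1 neK]].
have [sK0C nsK0G tiK0N cK0] := ksetP kK0.
have [sK1C nsK1G tiK1N cK1] := ksetP kK1.
have sCG := normal_sub nsCG.
have nK0G := normal_norm nsK0G.
have eK01 : #|K0| = #|K1| by apply/eqP; rewrite -(eqn_pmul2r N0) cK0 cK1.
have nK0K1 : K1 \subset 'N(K0) by apply: subset_trans (subset_trans sK1C sCG) nK0G.
have eC : K0 * K1 = C.
  have nsJ : (K0 <*> K1)%G <| G by rewrite /= norm_joinEr // normalM.
  have sJC : K0 <*> K1 \subset C by rewrite join_subG sK0C.
  have [eK0|] := kset_chief minN sNG sNC kK0 nsJ (joing_subl _ _) sJC; last first.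
    by rewrite /= norm_joinEr.
  case/eqP: neK; apply/val_inj/eqP; rewrite eq_sym eqEcard eK01 leqnn andbT.
  by apply: subset_trans (joing_subr K0 K1) _; rewrite /= eK0.
set L := (K0 :&: K1)%G.
have cL : (#|L| * #|N|)%N = #|K0|.
  have := mul_cardG K0 K1; rewrite eC -cK1 => h.
  by apply/eqP; rewrite -(eqn_pmul2r (cardG_gt0 K1)) h -mulnA mulnC (mulnC #|N|).
have nsLG : L <| G by apply: normalI.
have nNL : L \subset 'N(N) := subset_trans (normal_sub nsLG) nNG.
set D := (N <*> L)%G.
have eD : D :=: N * L by rewrite /= norm_joinEr.
have tiNL : N :&: L = 1.
  by apply/trivgP; rewrite -tiK0N setIC subsetI subsetIl (subset_trans (subsetIr _ _)) ?subsetIl.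
have cD : #|D| = #|K0| by rewrite eD (TI_cardMg tiNL) mulnC cL.
have nsDG : D <| G by rewrite eD normalM.
have sND : N \subset D by rewrite eD mulG_subl.
have sDC : D \subset C.
  by rewrite eD mul_subG // (subset_trans (subsetIl _ _)).
have cDC : (#|D| * #|N|)%N = #|C| by rewrite cD cK0.
have ltDC : #|D| < #|C| by rewrite -cDC ltn_Pmulr.
have IH := IHn D (leq_trans ltDC leCn) nsDG sND.
have iD : #|D : N| = #|L|.
  by apply/eqP; rewrite -(eqn_pmul2l N0) Lagrange // cD -cL mulnC.
have iC : #|C : N| = #|K0|.
  by apply/eqP; rewrite -(eqn_pmul2l N0) Lagrange // -cK0 mulnC.
have [c K0c Dc] : exists2 c, c \in K0 & c \notin D.
  apply/subsetPn/negP => sK0D.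
  have eK0D : K0 :=: D by apply/eqP; rewrite eqEcard sK0D cD leqnn.
  case/negP: ntN; rewrite -subG1 -tiK0N subsetI subxx eK0D sND.
  done.
have kD K : K \in kset G N C -> (K :&: D)%G \in kset G N D.
  move=> kK; have [sKC nsKG tiKN cK] := ksetP kK.
  rewrite inE /= subsetIr normalI //= setIAC tiKN -/(1 : {set gT}) subsetIl /=.
  have nKD : D \subset 'N(K) := subset_trans (normal_sub nsDG) (normal_norm nsKG).
  have nsJ : (K <*> D)%G <| G by rewrite /= norm_joinEr // normalM.
  have sJC : K <*> D \subset C by rewrite join_subG sKC.
  have [eK|] := kset_chief minN sNG sNC kK nsJ (joing_subl _ _) sJC.
    case/negP: ntN; rewrite -subG1 -tiKN subsetI subxx.
    by rewrite -eK (subset_trans sND) // joing_subr.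
  rewrite /= norm_joinEr // => eKD.
  by rewrite -(eqn_pmul2l (cardG_gt0 K)) mulnA (mul_cardG K D) eKD -cK mulnAC.
pose fib (L' : {group gT}) := [set K in kset G N C | K :&: D == L' :> {set gT}].
have cover : kset G N C \subset \bigcup_(L' in kset G N D) fib L'.
  apply/subsetP => K kK; apply/bigcupP; exists (K :&: D)%G; first exact: kD.
  by rewrite inE kK /=.
have fibB L' : L' \in kset G N D -> #|fib L'| <= #|N|.
  move=> kL'; have [sL'D _ _ cL'] := ksetP kL'.
  pose f (K : {group gT}) := odflt 1 [pick y in K :&: c *: N].
  have fP K : K \in kset G N C -> f K \in K :&: c *: N.
    move=> kK; rewrite /f; case: pickP => //= none.
    have : c \in K * N by rewrite (kset_mul sNC kK) (subsetP sK0C).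
    case/mulsgP => k m Kk Nm def_c.
    move/(_ k): none; rewrite inE Kk mem_lcoset def_c invMg -mulgA mulVg mulg1 groupV Nm.
    by [].
  have finj : {in fib L' &, injective f}.
    move=> K K' /setIdP[kK /eqP eK] /setIdP[kK' /eqP eK'] eF.
    have /setIP[Ky cy] := fP K kK.
    have /setIP[K'y _] := fP K' kK'; rewrite -eF in K'y.
    have yD : f K \notin D.
      apply: contra Dc => Dy; rewrite mem_lcoset in cy.
      have -> : c = f K * (c^-1 * f K)^-1 by rewrite invMg invgK mulgA mulgV mul1g.
      by rewrite groupM ?groupV // (subsetP sND).
    have [sKC nsKG tiKN cK] := ksetP kK.
    have [sK'C nsK'G tiK'N cK'] := ksetP kK'.
    have nKK' : K \subset 'N(K') := subset_trans (subset_trans sKC sCG) (normal_norm nsK'G).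
    have nsJ : (K' <*> K)%G <| G by rewrite /= norm_joinEr // normalM.
    have sJC : K' <*> K \subset C by rewrite join_subG sK'C.
    have eKK : #|K| = #|K'| by apply/eqP; rewrite -(eqn_pmul2r N0) cK cK'.
    have [eJ|] := kset_chief minN sNG sNC kK' nsJ (joing_subl _ _) sJC.
      apply/val_inj/eqP; rewrite eqEcard eKK leqnn andbT.
      by apply: subset_trans (joing_subr K' K) _; rewrite /= eJ.
    rewrite /= norm_joinEr // => eJ.
    have sL'I : L' \subset K' :&: K.
      by rewrite subsetI; apply/andP; split; [rewrite -eK' | rewrite -eK]; apply: subsetIl.
    have cI : #|K' :&: K| = #|L'|.
      have := mul_cardG K' K; rewrite eJ -cK eKK => h.
      have cK'D : #|K'| = #|D| by apply/eqP; rewrite -(eqn_pmul2r N0) cK' cDC.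
      apply/eqP; rewrite -(eqn_pmul2l N0) -(eqn_pmul2l (cardG_gt0 K')) mulnA -h.
      by rewrite (mulnC #|N|) cL' -cK'D.
    have eI : K' :&: K = L' by apply/eqP; rewrite eq_sym eqEcard sL'I cI leqnn.
    by case/negP: yD; rewrite (subsetP sL'D) // -eI inE K'y Ky.
  rewrite -(card_in_imset finj); rewrite -(card_lcoset N c).
  apply: subset_leq_card; apply/subsetP => _ /imsetP[K fK ->].
  by case/setIdP: fK => /fP /setIP[].
apply: leq_trans (subset_leq_card cover) _; apply: leq_trans (card_bigcup_le _ _) _.
have sB : \sum_(i in kset G N D) #|fib i| <= \sum_(i in kset G N D) #|N|.
  by apply: leq_sum => i; apply: fibB.
apply: leq_trans sB _.
by rewrite sum_nat_const iC -cL -iD leq_mul2r IH orbT.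
Qed.


Lemma syl_mul r X K (S : {group gT}) : K <| X -> r.-Sylow(X) S -> r.-nat #|X : K| -> K * S = X.
Proof.
move=> nsKX sylS rXK; have [sSX rS r'XS] := and3P sylS.
have nKS : S \subset 'N(K) := subset_trans sSX (normal_norm nsKX).
have sJX : K <*> S \subset X by rewrite join_subG normal_sub.
have i1 : #|X : K <*> S| = 1%N.
  apply: pnat_1 (pnat_dvd (indexgS _ (joing_subl K S)) rXK) _.
  exact: pnat_dvd (indexgS _ (joing_subr K S)) r'XS.
by have := index1g sJX i1; rewrite -norm_joinEr // => <-.
Qed.

Lemma max_compl G N M : minnormal N G -> N \subset G -> abelian N ->
  maximal M G -> ~~ (N \subset M) -> M :&: N = 1 /\ N * M = G.
Proof.
move=> minN sNG abN maxM nNM.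
have [nsNG ntN minN'] := minnormal_facts minN sNG.
have [ltMG maxM'] := maxgroupP maxM.
have sMG := proper_sub ltMG.
have nNM' : M \subset 'N(N) := subset_trans sMG (normal_norm nsNG).
have eNM : N * M = G.
  apply/eqP; rewrite eqEsubset mul_subG //=; apply/negPn/negP => nG.
  have ltJ : (N <*> M)%G \proper G.
    by rewrite properE /= join_subG sNG sMG /= norm_joinEr.
  have := maxM' _ ltJ (joing_subr _ _) => eJ.
  by case/negP: nNM; rewrite -eJ joing_subl.
split=> //.
have nsI : (M :&: N)%G <| G.
  rewrite /normal /= (subset_trans (subsetIl _ _) sMG) -eNM mul_subG //.
    by rewrite cents_norm // centsC (subset_trans (subsetIr _ _)).
  by rewrite normsI ?normG.
have [//|eI] := minN' _ nsI (subsetIr _ _).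
by case/negP: nNM; rewrite -eI subsetIl.
Qed.


Lemma fiber_bound G N K p : solvable G -> minnormal N G -> N \subset G ->
  prime p -> p.-abelem N -> ~~ (G \subset 'C(N)) -> K \in kset G N 'C_G(N) ->
  #|[set M : {group gT} | [&& maximal M G, ~~ (N \subset M) & K \subset M]]| <= #|N|.
Proof.
move=> solG minN sNG pr_p abN nCG kK.
have [nsNG ntN minN'] := minnormal_facts minN sNG.
have nNG := normal_norm nsNG.
have N0 : 0 < #|N| by [].
have abN' := abelem_abelian abN.
set C := 'C_G(N)%G.
have nsCG : C <| G.
  by have := subcent_normal G N; rewrite (setIidPl nNG).
have sCG := normal_sub nsCG; have nCG' := normal_norm nsCG.
have sNC : N \subset C by rewrite subsetI sNG.
have [sKC nsKG tiKN cK] := ksetP kK.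
have ntQ : G / C != 1.
  apply: contra nCG; rewrite -subG1 quotient_sub1 // => sGC.
  by rewrite (subset_trans sGC) ?subsetIr.
have [Rq minRq sRqG] := minnormal_exists ntQ (normG (G / C)).
have [nRq ntRq /is_abelemP[r pr_r abRq]] :=
  minnormal_solvable minRq sRqG (quotient_sol C solG).
set R := (coset C @*^-1 Rq)%G.
have nsRG : R <| G.
  by rewrite -(quotientGK nsCG) cosetpre_normal /normal sRqG.
have sRG := normal_sub nsRG.
have sCR : C \subset R by apply: sub_cosetpre.
have iRC : #|R : C| = #|Rq|.
  by rewrite -card_quotient ?(subset_trans sRG) // cosetpreK.
have rRC : r.-nat #|R : C| by rewrite iRC; apply: abelem_pgroup abRq.
have iRC1 : 1 < #|R : C| by rewrite iRC cardG_gt1.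
have cRC : (#|C| * #|R : C|)%N = #|R| := Lagrange sCR.
have ltCR : #|C| < #|R| by rewrite -cRC ltn_Pmulr.
have nsCR : C <| R := normalS sCR sRG nsCG.
have rp : r != p.
  apply/eqP => erp; rewrite erp in rRC.
  have [P sylP] := Sylow_exists p R.
  have eR := syl_mul nsCR sylP rRC.
  have [sPR pP _] := and3P sylP.
  have nNP : P \subset 'N(N) := subset_trans (subset_trans sPR sRG) nNG.
  have pNP : p.-group (N <*> P)%G by rewrite /= norm_joinEr // pgroupM pP abelem_pgroup.
  have nsN : N <| (N <*> P)%G.
    by apply: normalS (joing_subl _ _) _ nsNG; rewrite join_subG sNG (subset_trans sPR).
  have := meet_center_nil (pgroup_nil pNP) nsN ntN => ntZ.
  have nsT : ('C_N(R))%G <| G.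
    by rewrite /normal /= (subset_trans (subsetIl _ _) sNG) normsI ?norms_cent ?normal_norm.
  have [eT|eT] := minN' _ nsT (subsetIl _ _).
    case/negP: ntZ; rewrite -subG1 -eT /= subsetI subsetIl /= -eR centM subsetI.
    have cNC : N \subset 'C(C) by rewrite centsC subsetIr.
    rewrite (subset_trans (subsetIl _ _) cNC) /=.
    apply: subset_trans (subsetIr _ _) _; apply: subset_trans (subsetIr _ _) _.
    by apply: centS; apply: joing_subr.
  have sRC : R \subset C by rewrite subsetI sRG centsC -eT subsetIr.
  have eRC : (R : {set gT}) = C by apply/eqP; rewrite eqEsubset sRC sCR.
  by move: iRC1; rewrite eRC indexgg.
have r'N : r^'.-nat #|N| by apply: (pi_p'nat (abelem_pgroup abN)); rewrite !inE.
set S := [set M : {group gT} | _].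
have [->|[M0 SM0]] := set_0Vmem S; first by rewrite cards0.
have propM M : M \in S -> [/\ N * (M :&: R) = R,
    (#|M :&: R| * #|N|)%N = #|R|, M :&: C = K & 'N_G(M :&: R) = M].
  rewrite inE => /and3P[maxM nNM sKM].
  have [tiMN eNM] := max_compl minN sNG abN' maxM nNM.
  have [ltMG maxM'] := maxgroupP maxM; have sMG := proper_sub ltMG.
  have tiNX : N :&: (M :&: R) = 1.
    apply/trivgP; rewrite -tiMN subsetI (subset_trans (subsetIr _ _) (subsetIl _ _)).
    by rewrite subsetIl.
  have eR : N * (M :&: R) = R.
    by rewrite group_modl ?(subset_trans sNC sCR) // eNM; apply/setIidPr.
  have cX : (#|M :&: R| * #|N|)%N = #|R| by rewrite mulnC -(TI_cardMg tiNX) eR.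
  have tiNC : N :&: (M :&: C) = 1.
    apply/trivgP; rewrite -tiMN subsetI (subset_trans (subsetIr _ _) (subsetIl _ _)).
    by rewrite subsetIl.
  have eC : N * (M :&: C) = C.
    by rewrite group_modl // eNM; apply/setIidPr.
  have cMC : (#|M :&: C| * #|N|)%N = #|C| by rewrite mulnC -(TI_cardMg tiNC) eC.
  have eMC : M :&: C = K.
    apply/eqP; rewrite eq_sym eqEcard subsetI sKM sKC /=.
    by rewrite -(leq_pmul2r N0) cMC cK.
  split=> //.
  have sMN : M \subset 'N_G(M :&: R).
    by rewrite subsetI sMG normsI ?normG // (subset_trans sMG) ?normal_norm.
  have ltN : ('N_G(M :&: R))%G \proper G.
    rewrite properE subsetIl /=; apply/negP => sGN.
    have nXG : G \subset 'N(M :&: R) := subset_trans sGN (subsetIr _ _).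
    have cNX : N \subset 'C(M :&: R).
      apply/commG1P/trivgP; rewrite -tiNX subsetI commg_subl commg_subr.
      rewrite (subset_trans sNG nXG) andbT.
      by rewrite (subset_trans (subsetIr _ _) (subset_trans sRG nNG)).
    have sXK : M :&: R \subset K.
      rewrite -eMC subsetI subsetIl /= subsetI (subset_trans (subsetIr _ _) sRG) /=.
      by rewrite centsC.
    have := subset_leq_card sXK; rewrite -(leq_pmul2r N0) cX cK leqNgt.
    by rewrite ltCR.
  have e := maxM' _ ltN sMN.
  by rewrite -[in RHS]e.
have XS M : M \in S -> exists2 S0 : {group gT}, r.-Sylow(R) S0 & M :&: R = K * S0.
  move=> SM; have [eR cX eMC nX] := propM M SM.
  have sKM : K \subset M by move: SM; rewrite inE => /and3P[].
  set X := (M :&: R)%G.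
  have sKX : K \subset X by rewrite subsetI sKM (subset_trans sKC sCR).
  have sXR : X \subset R := subsetIr _ _.
  have nsKX : K <| X := normalS sKX (subset_trans sXR sRG) nsKG.
  have KN0 : 0 < (#|K| * #|N|)%N by rewrite muln_gt0 cardG_gt0.
  have iXK : #|X : K| = #|R : C|.
    apply/eqP; rewrite -(eqn_pmul2l KN0) [in X in _ == X]cK cRC mulnAC.
    by rewrite (Lagrange sKX) cX.
  have iRX : #|R : X| = #|N|.
    apply/eqP; rewrite -(eqn_pmul2l (cardG_gt0 X)) (Lagrange sXR).
    by rewrite cX.
  have [S0 sylS0] := Sylow_exists r X.
  exists S0; last by rewrite (syl_mul nsKX sylS0) // iXK.
  have [sS0X rS0 r'XS0] := and3P sylS0.
  rewrite /pHall (subset_trans sS0X sXR) rS0 /=.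
  by rewrite -(Lagrange_index sXR sS0X) pnatM iRX r'N.
have [S1 syl1 eX0] := XS M0 SM0.
have [eR0 cX0 eM0C nX0] := propM M0 SM0.
apply: leq_trans (_ : #|[set (M0 :^ n)%G | n in N]| <= #|N|); last exact: leq_imset_card.
apply: subset_leq_card; apply/subsetP => M SM.
have [S2 syl2 eX] := XS M SM.
have [eR cX eMC nX] := propM M SM.
have [y Ry eS2] := Sylow_trans syl1 syl2.
have nKy : y \in 'N(K) := subsetP (subset_trans sRG (normal_norm nsKG)) y Ry.
have eXy : M :&: R = (M0 :&: R) :^ y by rewrite eX eS2 eX0 conjsMg (normP nKy).
have nNX0 : M0 :&: R \subset 'N(N) := subset_trans (subsetIr _ _) (subset_trans sRG nNG).
have : y \in (M0 :&: R) * N by rewrite (normC nNX0) eR0.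
case/mulsgP => x n X0x Nn def_y.
have eXn : M :&: R = (M0 :&: R) :^ n by rewrite eXy def_y conjsgM (conjGid X0x).
apply/imsetP; exists n => //; apply: val_inj => /=.
rewrite -nX eXn normJ -[in RHS]nX0 conjIg (conjGid (subsetP sNG n Nn)).
by [].
Qed.


Lemma compl_bound G N p : solvable G -> minnormal N G -> N \subset G ->
  prime p -> p.-abelem N ->
  (#|[set M : {group gT} | maximal M G && ~~ (N \subset M)]| + #|G : N|)%N <= #|G|.
Proof.
move=> solG minN sNG pr_p abN.
have [nsNG ntN minN'] := minnormal_facts minN sNG.
have nNG := normal_norm nsNG.
have N1 : 1 < #|N| by rewrite cardG_gt1.
have abN' := abelem_abelian abN.
set B := [set M : {group gT} | _].
set C := 'C_G(N)%G.
have nsCG : C <| G.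
  by have := subcent_normal G N; rewrite (setIidPl nNG).
have sCG := normal_sub nsCG; have nCG' := normal_norm nsCG.
have sNC : N \subset C by rewrite subsetI sNG.
have kb := kset_bound minN sNG nsCG sNC.
have LG : (#|N| * #|G : N|)%N = #|G| := Lagrange sNG.
have kM M : M \in B -> (M :&: C)%G \in kset G N C.
  rewrite inE => /andP[maxM nNM].
  have [tiMN eNM] := max_compl minN sNG abN' maxM nNM.
  have sMG := proper_sub (maxgroupp maxM).
  have tiNC : N :&: (M :&: C) = 1.
    apply/trivgP; rewrite -tiMN subsetI (subset_trans (subsetIr _ _) (subsetIl _ _)).
    by rewrite subsetIl.
  have eC : N * (M :&: C) = C.
    by rewrite group_modl // eNM; apply/setIidPr.
  rewrite inE /= subsetIr /= setIAC tiMN subsetIl /=.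
  rewrite mulnC -(TI_cardMg tiNC) eC eqxx andbT.
  have nG : N * M \subset 'N(M :&: C).
    rewrite mul_subG //; last by rewrite normsI ?normG ?(subset_trans sMG nCG').
    by rewrite cents_norm // centsC (subset_trans (subsetIr _ _)) ?subsetIr.
  by rewrite eNM in nG; rewrite /normal (subset_trans (subsetIr _ _) sCG) nG.
have [cGN|nCG] := boolP (G \subset 'C(N)).
  have eCG : C :=: G by apply/setIidPl.
  have sBk : B \subset kset G N C.
    apply/subsetP => M BM; have := kM M BM.
    suff -> : (M :&: C)%G = M by [].
    apply: val_inj => /=; rewrite eCG; apply/setIidPl.
    by move: BM; rewrite inE => /andP[/maxgroupp/proper_sub].
  have := leq_trans (subset_leq_card sBk) kb; rewrite eCG => hB.
  apply: leq_trans (leq_add hB (leqnn _)) _; rewrite -LG addnn -mul2n leq_mul2r.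
  by rewrite N1 orbT.
pose F (K : {group gT}) := [set M : {group gT} | [&& maximal M G, ~~ (N \subset M) & K \subset M]].
have cover : B \subset \bigcup_(K in kset G N C) F K.
  apply/subsetP => M BM; apply/bigcupP; exists (M :&: C)%G; first exact: kM.
  by move: BM; rewrite !inE => /andP[-> ->]; rewrite subsetIl.
have sB : \sum_(i in kset G N C) #|F i| <= \sum_(i in kset G N C) #|N|.
  by apply: leq_sum => i ki; apply: (fiber_bound solG minN sNG pr_p abN nCG ki).
have hB : #|B| <= #|C|.
  apply: leq_trans (subset_leq_card cover) _; apply: leq_trans (card_bigcup_le _ _) _.
  apply: leq_trans sB _; rewrite sum_nat_const -(Lagrange sNC) mulnC leq_mul2l.
  by rewrite kb orbT.
have LC : (#|C| * #|G : C|)%N = #|G| := Lagrange sCG.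
have iGC : 1 < #|G : C| by rewrite indexg_gt1 subsetI subxx.
have h1 : (#|C| * 2 <= #|G|)%N by rewrite -LC leq_mul2l iGC orbT.
have h2 : (#|G : N| * 2 <= #|G|)%N by rewrite -LG mulnC leq_mul2r N1 orbT.
apply: leq_trans (leq_add hB (leqnn _)) _.
by rewrite -leq_double doubleD -!muln2 (leq_trans (leq_add h1 h2)) // addnn muln2.
Qed.

End Wall.

Lemma wall_gen n : forall (gT : finGroupType) (G : {group gT}), #|G| <= n -> solvable G ->
  #|[set M : {group gT} | maximal M G]| < #|G|.
Proof.
elim: n => [|n IHn] gT G leG solG; first by move: (cardG_gt0 G); rewrite ltnNge leG.
have [G1|ntG] := eqVneq (G : {set gT}) 1.
  rewrite (_ : [set M : {group gT} | maximal M G] = set0) ?cards0 //.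
  apply/setP => M; rewrite !inE; apply/negP => /maxgroupp.
  by rewrite G1 properE sub1G andbF.
have [N minN sNG] := minnormal_exists ntG (normG G).
have [nNG ntN /is_abelemP[p pr_p abN]] := minnormal_solvable minN sNG solG.
have nsNG : N <| G by rewrite /normal sNG.
set A := [set M : {group gT} | maximal M G && (N \subset M)].
set B := [set M : {group gT} | maximal M G && ~~ (N \subset M)].
have eS : [set M : {group gT} | maximal M G] \subset A :|: B.
  apply/subsetP => M; rewrite !inE => ->; by case: (N \subset M).
have hB := compl_bound solG minN sNG pr_p abN.
have hA : #|A| < #|G : N|.
  have ltQ : #|G / N| < #|G| := ltn_quotient ntN sNG.
  have := IHn _ (G / N)%G (ltnSE (leq_trans ltQ leG)) (quotient_sol N solG).
  rewrite card_quotient //; apply: leq_trans; rewrite ltnS.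
  have inj : {in A &, injective (fun M : {group gT} => (M / N)%G)}.
    move=> M1 M2; rewrite !inE => /andP[m1 s1] /andP[m2 s2] /(congr1 val) /= e.
    have sM1 := proper_sub (maxgroupp m1); have sM2 := proper_sub (maxgroupp m2).
    have n1 := normalS s1 sM1 nsNG; have n2 := normalS s2 sM2 nsNG.
    have h := quotient_inj n1 n2 e. exact: val_inj h.
  rewrite -(card_in_imset inj); apply: subset_leq_card; apply/subsetP => _ /imsetP[M AM ->].
  move: AM; rewrite !inE => /andP[mM sM].
  by rewrite quotient_maximal // (normalS sM (proper_sub (maxgroupp mM)) nsNG).
apply: leq_ltn_trans (subset_leq_card eS) _ ; apply: leq_ltn_trans (leq_card_setU _ _).1 _.
by apply: leq_trans hB; rewrite [#|A| + _]addnC ltn_add2l.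
Qed.

Section Main.
Variable gT : finGroupType.
Implicit Types G H K M : {group gT}.

Lemma coversE K H : covers K H = maximal K H.
Proof.
apply/andP/maxgroupP => [[ltKH /forallP noM] | [ltKH maxK]].
  split=> // M ltMH sKM; have := noM M; rewrite ltMH andbT properE sKM /= negbK => sMK.
  by apply/eqP; rewrite eqEsubset sMK sKM.
split=> //; apply/forallP => M; apply/negP => /andP[ltKM ltMH].
by have eMK := maxK M ltMH (proper_sub ltKM); rewrite eMK properxx in ltKM.
Qed.

Lemma up_bound G H : H \subset G ->
  #|[set K : {group gT} | (K \subset G) && covers H K]| <= #|G| - #|H|.
Proof.
move=> sHG; set U := [set K : {group gT} | _].
pose f (K : {group gT}) := odflt 1 [pick x in K :\: H].
have fP K : K \in U -> f K \in K :\: H.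
  rewrite inE => /andP[_ /andP[/properP[_ [x Kx Hx]] _]].
  rewrite /f; case: pickP => //= /(_ x); rewrite inE Kx Hx.
  by [].
have half K1 K2 : K1 \in U -> K2 \in U -> f K1 \in K2 -> K1 \subset K2.
  move=> UK1 UK2 K2x; have /setDP[K1x Hx] := fP K1 UK1.
  move: UK1 UK2; rewrite !inE => /andP[_ /andP[ltHK1 /forallP/(_ (K1 :&: K2)%G) h]].
  case/andP=> [_ /andP[ltHK2 _]].
  have ltHI : H \proper K1 :&: K2.
    apply/properP; split; first by rewrite subsetI !proper_sub.
    by exists (f K1) => //; rewrite inE K1x K2x.
  move: h; rewrite /= ltHI /= properE subsetIl /= negbK => h.
  exact: subset_trans h (subsetIr _ _).
have finj : {in U &, injective f}.
  move=> K1 K2 U1 U2 e; apply: gr_eq; apply/eqP; rewrite eqEsubset.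
  have h1 : f K1 \in K2 by rewrite e; case/setDP: (fP K2 U2).
  have h2 : f K2 \in K1 by rewrite -e; case/setDP: (fP K1 U1).
  by rewrite (half K1 K2 U1 U2 h1) (half K2 K1 U2 U1 h2).
rewrite -(card_in_imset finj) -(setIidPr sHG) -cardsD.
apply: subset_leq_card; apply/subsetP => _ /imsetP[K UK ->].
have /setDP[Kx Hx] := fP K UK.
move: UK; rewrite !inE => /andP[sKG _].
by rewrite Hx (subsetP sKG _ Kx).
Qed.

Lemma degree_bound G H : solvable G -> H \subset G -> sg_degree G H <= #|G| - 1.
Proof.
move=> solG sHG; rewrite /sg_degree.
set D := [set K in subgroup_vertices G | sg_adj H K].
have sD : D \subset [set K : {group gT} | maximal K H] :|:
                    [set K : {group gT} | (K \subset G) && covers H K].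
  apply/subsetP => K; rewrite !inE /sg_adj => /andP[sKG /orP[c|c]].
    by rewrite sKG c orbT.
  by rewrite -coversE c.
have hm := wall_gen (leqnn _) (solvableS sHG solG).
have hu := up_bound sHG.
have hHG := subset_leq_card sHG.
apply: leq_trans (subset_leq_card sD) _; apply: leq_trans (leq_card_setU _ _).1 _.
move: hm hu hHG.
move: #|[set K : {group gT} | maximal K H]| => a.
move: #|[set K : {group gT} | (K \subset G) && covers H K]| => b.
move: #|G| #|H| => g h ha hb hgh.
apply: leq_trans (leq_add (leqnn a) hb) _.
rewrite addnBA //; apply: leq_trans (leq_sub2l (a + g) ha) _.
by rewrite -addn1 subnDl.
Qed.


Lemma edges_bound G : solvable G ->
  (#|sg_edges G|).*2 <= #|subgroup_vertices G| * (#|G| - 1).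
Proof.
move=> solG; set V := subgroup_vertices G.
have adjC H K : sg_adj H K = sg_adj K H by rewrite /sg_adj orbC.
have adj_irr H : sg_adj H H = false by rewrite /sg_adj /covers properxx.
set P := [set x : {group gT} * {group gT} | [&& x.1 \in V, x.2 \in V & sg_adj x.1 x.2]].
set P1 := [set x in P | enum_rank x.1 < enum_rank x.2].
pose sw (x : {group gT} * {group gT}) := (x.2, x.1).
have swK : involutive sw by case.
have hE : #|sg_edges G| <= #|P1|.
  apply: leq_trans (leq_imset_card (fun x => [set x.1; x.2]) P1).
  apply: subset_leq_card; apply/subsetP => e /imset2P[H1 H2 VH1].
  rewrite inE => /andP[VH2 adj] ->; move: VH1 VH2; rewrite !inE => VH1 VH2.
  case: (ltngtP (enum_rank H1) (enum_rank H2)) => c.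
  - by apply/imsetP; exists (H1, H2); rewrite // !inE VH1 VH2 adj c.
  - apply/imsetP; exists (H2, H1); last by rewrite /= setUC.
    by rewrite !inE VH1 VH2 adjC adj c.
  - have e12 : H1 = H2 by apply: enum_rank_inj; apply: val_inj.
    by move: adj; rewrite e12 adj_irr.
have hsw : #|sw @: P1| = #|P1| by apply: card_imset; apply: inv_inj.
have dis : P1 :&: sw @: P1 = set0.
  apply/setP => x; rewrite !inE; apply/negP => /andP[/andP[_ c1]].
  case/imsetP => y; rewrite !inE => /andP[_ c2] ex.
  by move: c1; rewrite ex /= ltnNge ltnW.
have sP : P1 :|: sw @: P1 \subset P.
  apply/subsetP => x; rewrite inE => /orP[|/imsetP[y]]; first by rewrite inE => /andP[].
  by rewrite !inE => /andP[/and3P[V1 V2 a] _] ->; rewrite /= V1 V2 adjC a.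
have hP1 : (#|P1|).*2 <= #|P|.
  have eU : #|P1 :|: sw @: P1| = #|P1| + #|sw @: P1| by rewrite cardsU dis cards0 subn0.
  by rewrite -addnn -{2}hsw -eU subset_leq_card.
have cov : P \subset \bigcup_(H in V)
    [set (H, K) | K in [set K in V | sg_adj H K]].
  apply/subsetP => x; rewrite inE => /and3P[V1 V2 a]; apply/bigcupP.
  exists x.1 => //; apply/imsetP; exists x.2; last by case: x {V1 V2 a}.
  by apply/setIdP.
have hP : #|P| <= #|V| * (#|G| - 1).
  apply: leq_trans (subset_leq_card cov) _; apply: leq_trans (card_bigcup_le _ _) _.
  rewrite -sum_nat_const; apply: leq_sum => H VH.
  apply: leq_trans (leq_imset_card _ _) _.
  by apply: degree_bound; move: VH; rewrite inE.
apply: leq_trans (_ : _ <= (#|P1|).*2) _; first by rewrite leq_double.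
exact: leq_trans hP1 hP.
Qed.

End Main.

Local Close Scope group_scope.

Theorem corollary2p2 (gT : finGroupType) (G H : {group gT}) :
  solvable G -> H \subset G ->
  sg_degree G H <= #|G| - 1 /\
  (#|sg_edges G|).*2 <= #|subgroup_vertices G| * (#|G| - 1).
Proof.
by move=> solG sHG; split; [apply: degree_bound | apply: edges_bound].
Qed.
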